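(* Assume (H1)–(H9) with (H7) in the form (H7-WFL), all as described in the context. Then there exists an event $\Omega_1\subseteq\Omega$ of full probability such that for all $\omega\in\Omega_1$, $$\tilde A(\omega)=\overline A:=\max(\mu^\star_L,\mu^\star_R).$$
   Context: $(\Omega,\mathbf F,P)$ probability space; $H:\mathbb R\times\mathbb R\times\Omega\to\mathbb R$ measurable; for Borel $V$, $\mathbf F(V)$ is the $\sigma$-algebra generated by $\omega\mapsto H(p,y,\omega)$, $y\in V$, $p\in\mathbb R$. $(\tau_z)_{z\in\mathbb R}$ is an ergodic group of measure-preserving maps of $\Omega$ ($\tau_{x+z}=\tau_x\circ\tau_z$; invariant events have probability 0 or 1). (H1) $H$ Lipschitz in $p$ uniformly in $(y,\omega)$. (H2) $-c_0|p+\gamma|\le H\le C_0|p+\gamma|$ for some $c_0,C_0,\gamma>0$. (H3) $\lim_{|p|\to\infty}\inf_{(y,\omega)}H=+\infty$. (H4) $|H(p,y,\omega)-H(p,x,\omega)|\le w(|x-y|(1+|p|))$ for a modulus $w$. (H5) $H$ convex in $p$. (H6) $H(p,y,\omega)\ge H(0,y,\omega)$. (H7-WFL) $H(p,y,\omega)=\phi(y)H_L(p,y,\omega)+(1-\phi(y))H_R(p,y,\omega)$ with $\phi\in C^\infty$ non-increasing, $\phi=1$ on $(-\infty,-1]$, $\phi=0$ on $[1,\infty)$. (H8) $H_\alpha(p,y+z,\omega)=H_\alpha(p,y,\tau_z\omega)$ for $\alpha\in\{L,R\}$. (H9) $\mathbf F(U),\mathbf F(V)$ independent whenever $d(U,V)\ge1$.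 Definitions: $\tilde A(\omega)=\inf\{\mu:\ \exists v$ globally Lipschitz with $H(Dv,y,\omega)\le\mu$ in $\mathbb R\}$; $\mu^\star_\alpha$ is the almost surely constant value of $\inf\{\mu:\ \exists v$ globally Lipschitz with $H_\alpha(Dv,y,\omega)\le\mu$ in $\mathbb R\}$ (inequalities in the viscosity sense). *)

(* Defs.v *)
From HB Require Import structures.
From mathcomp Require Import all_boot all_order all_algebra.
From mathcomp Require Import all_classical all_reals all_analysis.
Set Implicit Arguments. Unset Strict Implicit. Unset Printing Implicit Defensive.
Import Order.TTheory GRing.Theory Num.Theory.
Import numFieldNormedType.Exports.
Local Open Scope classical_set_scope.
Local Open Scope ring_scope.

Section Defs.
Variable R : realType.

Definition glob_lipschitz (v : R -> R) : Prop :=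
  exists L : R, forall x y, `|v x - v y| <= L * `|x - y|.

Definition C1 (phi : R -> R) : Prop :=
  (forall x, derivable phi x 1) /\ continuous (derive1 phi).

Definition visc_subsol (F : R -> R -> R) (v : R -> R) (mu : R) : Prop :=
  continuous v /\
  forall (phi : R -> R) (y0 : R), C1 phi ->
    (\forall y \near y0, v y - phi y <= v y0 - phi y0) ->
    F (derive1 phi y0) y0 <= mu.

Definition effA (F : R -> R -> R) : \bar R :=
  ereal_inf [set (mu%:E) | mu in
    [set mu : R | exists v, glob_lipschitz v /\ visc_subsol F v mu]].

Definition modulus (w : R -> R) : Prop :=
  (forall r, 0 <= r -> 0 <= w r) /\
  (forall r s, 0 <= r -> r <= s -> w r <= w s) /\
  w 0 = 0 /\ (w r @[r --> 0^'+] --> 0).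

Definition smooth (f : R -> R) : Prop :=
  forall n x, derivable (derive1n n f) x 1.
End Defs.

Section Prob.
Context {d : measure_display} {Omega : measurableType d} {R : realType}.

Definition sigmaH (H : R -> R -> Omega -> R) (V : set R) : set (set Omega) :=
  <<s [set A | exists (p y : R) (B : set R),
          V y /\ measurable B /\ A = (fun w => H p y w) @^-1` B] >>.

Definition independent_sigma (P : probability Omega R)
    (F G : set (set Omega)) : Prop :=
  forall A B, F A -> G B -> P (A `&` B) = (P A * P B)%E.

Definition ergodic_group (P : probability Omega R) (tau : R -> Omega -> Omega)
  : Prop :=
  tau 0 = id /\
  (forall x z, tau (x + z) = tau x \o tau z) /\
  (forall z, measurable_fun setT (tau z)) /\
  (forall z A, measurable A -> P (tau z @^-1` A) = P A) /\
  (forall A, measurable A -> (forall z, tau z @` A = A) ->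
     P A = 0%E \/ P A = 1%E).
End Prob.

(* Main.v *)
Require Import Defs.
From HB Require Import structures.
From mathcomp Require Import all_boot all_order all_algebra.
From mathcomp Require Import all_classical all_reals all_analysis.
From mathcomp Require Import lra.
Import Order.TTheory GRing.Theory Num.Theory.
Import numFieldNormedType.Exports.
Local Open Scope classical_set_scope.
Local Open Scope ring_scope.

Section S.
Variable R : realType.

Lemma quad_C1 (K y0 : R) : 
  let phi : R -> R := K \*: ((id - cst y0) * (id - cst y0)) in
  (forall x : R, is_derive x (1:R) phi (K * ((x - y0) + (x - y0)))) /\ C1 phi /\ continuous phi.
Proof.
move=> phi.
have D : forall x : R, is_derive x (1:R) phi (K * ((x - y0) + (x - y0))).
  move=> x; apply: is_derive_eq.
  rewrite /= subr0 !scaler1 //.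
have Dv : derive1 phi = fun x => K * ((x - y0) + (x - y0)).
  by apply/funext => x; rewrite derive1E derive_val.
split => //; split; first split.
- by move=> x; have [] := D x.
- rewrite Dv => x; apply: cvgM; first exact: cvg_cst.
  by apply: cvgD; apply: cvgB => //; exact: cvg_cst.
move=> x; apply/differentiable_continuous; rewrite -derivable1_diffP.
by have [] := D x.
Qed.

Lemma effA_le (F : R -> R -> R) (s : \bar R) :
  (forall y, ((F 0 y)%:E <= s)%E) -> (effA F <= s)%E.
Proof.
move=> Fs; case: s Fs => [r| |] Fs; last 2 first.
- by rewrite leey.
- by have := Fs 0; rewrite leNgt ltNye.
apply: ge_ereal_inf; exists r%:E => //; exists r => //.
exists (fun _ => 0); split; first by exists 0 => x y; rewrite subrr normr0 mul0r.
split; first by move=> x; apply: cst_continuous.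
move=> phi y0 [dphi _] Hnear.
suff -> : derive1 phi y0 = 0 by have := Fs y0; rewrite lee_fin.
have [e e0 He] : exists2 e : R, 0 < e & forall y, `|y0 - y| < e -> phi y0 <= phi y.
  move: Hnear => /nbhs_ballP [e e0 He]; exists e => // y Hy.
  have := He y; rewrite /ball /= => /(_ Hy); lra.
have : is_derive y0 1 phi 0.
  apply: (@derive1_at_min _ _ (y0 - e) (y0 + e)).
  - lra.
  - by move=> t _; apply: dphi.
  - rewrite in_itv /=; apply/andP; split; lra.
  move=> t; rewrite in_itv /= => /andP [h1 h2]; apply: He.
  rewrite ltr_norml; apply/andP; split; lra.
by move=> D; rewrite derive1E derive_val.
Qed.

Lemma le_effA (F : R -> R -> R) :
  (forall p y, F 0 y <= F p y) ->
  (forall y0 e, 0 < e -> exists2 d, 0 < d & forall y, `|y - y0| < d -> F 0 y0 <= F 0 y + e) ->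
  forall y0, ((F 0 y0)%:E <= effA F)%E.
Proof.
move=> F6 lsc y0; apply: le_ereal_inf_tmp => _ [mu [v [[L Lv] [vc Hv]]] <-].
rewrite lee_fin; apply/ler_addgt0Pr => e e0.
have [d d0 Hd] := lsc y0 e e0.
pose dl := d / 2; have dl0 : 0 < dl by rewrite divr_gt0.
pose K := (`|L| + 1) / dl.
have [Dphi [C1phi cphi]] := quad_C1 K y0.
set phi := K \*: _ in Dphi C1phi cphi.
have phiE : forall y, phi y = K * ((y - y0) * (y - y0)) by [].
pose g := fun y => v y - phi y.
have [c cI cmax] : exists2 c, c \in `[y0 - dl, y0 + dl] & forall t, t \in `[y0 - dl, y0 + dl] -> g t <= g c.
  apply: EVT_max; first lra.
  apply: continuous_subspaceT => x; apply: continuousB; [exact: vc | exact: cphi].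
have gy0 : g y0 = v y0 by rewrite /g phiE subrr mul0r mulr0 subr0.
have bound : forall t, (t = y0 - dl \/ t = y0 + dl) -> g t < v y0.
  move=> t ht.
  have ht2 : `|t - y0| = dl by case: ht => ->; rewrite addrAC subrr add0r ?normrN gtr0_norm.
  have e1 : v t - v y0 <= `|L| * dl.
    apply: le_trans (ler_norm _) _; apply: le_trans (Lv _ _) _; rewrite ht2.
    by apply: ler_wpM2r; [exact: ltW | exact: ler_norm].
  have e2 : phi t = (`|L| + 1) * dl.
    rewrite phiE /K; case: ht => -> ; rewrite addrAC subrr add0r.
      by rewrite mulrNN mulrA divfK ?gt_eqF.
    by rewrite mulrA divfK ?gt_eqF.
  rewrite /g e2; lra.
have cI' : c \in `]y0 - dl, y0 + dl[.
  move: cI; rewrite !in_itv /= => /andP [c1 c2].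
  have gc : v y0 <= g c by rewrite -gy0; apply: cmax; rewrite in_itv /=; apply/andP; split; lra.
  apply/andP; split; rewrite lt_neqAle ?c1 ?c2 andbT; apply/eqP => hc.
    by have := bound c (or_introl (esym hc)); lra.
  by have := bound c (or_intror hc); lra.
have Fc : F (derive1 phi c) c <= mu.
  apply: Hv => //; near=> z.
  have : z \in `]y0 - dl, y0 + dl[ by near: z; exact: near_in_itvoo.
  rewrite in_itv /= => /andP [z1 z2]; apply: cmax; rewrite in_itv /=; apply/andP; split; lra.
have Fc0 := le_trans (F6 _ c) Fc.
have cd : `|c - y0| < d.
  move: cI'; rewrite in_itv /= => /andP [c1 c2]; rewrite ltr_norml.
  have : dl < d by rewrite /dl ltr_pdivrMr // ltr_pMr // ltr1n.
  move=> h; apply/andP; split; lra.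
have := Hd c cd; move: Fc0; clear; lra.
Unshelve. all: by end_near.
Qed.

Lemma mod_small (w0 : R -> R) : (w0 r @[r --> 0^'+] --> 0) -> w0 0 = 0 ->
  forall e, 0 < e -> exists2 d, 0 < d & forall r, 0 <= r -> r < d -> w0 r < e.
Proof.
move=> hc h0 e e0.
have /cvgrPdist_lt /(_ e e0) := hc.
case=> d /= d0 Hd; exists d => // r r0 rd.
have [->|rn0] := eqVneq r 0; first by rewrite h0.
have := Hd r; rewrite /ball /= sub0r normrN ger0_norm // => /(_ rd).
rewrite lt_neqAle eq_sym rn0 r0 => /(_ isT).
rewrite sub0r normrN => h; exact: le_lt_trans (ler_norm _) h.
Qed.

Lemma dense_le (f : R -> R) (q : R) :
  (forall z0 e, 0 < e -> exists2 d, 0 < d & forall z, `|z - z0| < d -> f z0 <= f z + e) ->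
  (forall r : rat, f (-1 - `|ratr r|) <= q) -> forall z, z <= -1 -> f z <= q.
Proof.
move=> lsc hq z hz; apply/ler_addgt0Pr => e e0.
have [d d0 Hd] := lsc z e e0.
have [r] : exists r : rat, ratr r \in `](-1 - z), (-1 - z + d)[.
  by apply: rat_in_itvoo; rewrite ltrDl.
rewrite in_itv /= => /andP [r1 r2].
have rpos : 0 <= (ratr r : R) by move: r1; clear -hz; lra.
have := Hd (-1 - `|ratr r|); rewrite ger0_norm //.
have -> : `|-1 - (ratr r : R) - z| < d.
  rewrite ltr_norml; apply/andP; split; move: r1 r2 hz d0; clear; lra.
move=> /(_ isT) h; apply: le_trans h _; rewrite lerD2r.
by have := hq r; rewrite ger0_norm.
Qed.
End S.

Theorem theorem4p11 (d : measure_display) (Omega : measurableType d)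
  (R : realType) (P : probability Omega R)
  (H HL HR : R -> R -> Omega -> R) (tau : R -> Omega -> Omega)
  (phi : R -> R) (muL muR : \bar R) :
  (* H measurable *)
  measurable_fun setT (fun x : R * R * Omega => H x.1.1 x.1.2 x.2) ->
  ergodic_group P tau ->
  (* (H1) *)
  (exists L : R, forall p q y w, `|H p y w - H q y w| <= L * `|p - q|) ->
  (* (H2) *)
  (exists c0 C0 g : R, 0 < c0 /\ 0 < C0 /\ 0 < g /\
     forall p y w, - c0 * `|p + g| <= H p y w /\ H p y w <= C0 * `|p + g|) ->
  (* (H3) *)
  (forall M : R, exists K : R, forall p, K <= `|p| -> forall y w, M <= H p y w) ->
  (* (H4) *)
  (exists w0 : R -> R, modulus w0 /\
     forall p x y w, `|H p y w - H p x w| <= w0 (`|x - y| * (1 + `|p|))) ->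
  (* (H5) *)
  (forall y w p q t, 0 <= t -> t <= 1 ->
     H (t * p + (1 - t) * q) y w <= t * H p y w + (1 - t) * H q y w) ->
  (* (H6) *)
  (forall p y w, H 0 y w <= H p y w) ->
  (* (H7-WFL) *)
  smooth phi ->
  (forall x y, x <= y -> phi y <= phi x) ->
  (forall x, x <= -1 -> phi x = 1) ->
  (forall x, 1 <= x -> phi x = 0) ->
  (forall p y w, H p y w = phi y * HL p y w + (1 - phi y) * HR p y w) ->
  (* (H8) *)
  (forall p y z w, HL p (y + z) w = HL p y (tau z w)) ->
  (forall p y z w, HR p (y + z) w = HR p y (tau z w)) ->
  (* (H9) *)
  (forall U V : set R, measurable U -> measurable V ->
     (forall x y, U x -> V y -> 1 <= `|x - y|) ->
     independent_sigma P (sigmaH H U) (sigmaH H V)) ->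
  (* mu*_L, mu*_R : the almost surely constant values *)
  {ae P, forall w, effA (fun p y => HL p y w) = muL} ->
  {ae P, forall w, effA (fun p y => HR p y w) = muR} ->
  exists Omega1 : set Omega, measurable Omega1 /\ P Omega1 = 1%E /\
    forall w, Omega1 w -> effA (fun p y => H p y w) = Order.max muL muR.
Proof.
move=> mH [tau0 [tauadd [taum [taupres _]]]] _ _ _ [w0 [[_ [_ [w00 w0cvg]]] H4]] _ H6
  _ phimon phiL phiR H7 H8L H8R _ aeL aeR.
have phi01 : forall y, 0 <= phi y <= 1.
  move=> y; apply/andP; split.
    have [y1|y1] := leP 1 y; first by rewrite phiR.
    by rewrite -(phiR 1) // phimon // ltW.
  have [y1|y1] := leP y (-1); first by rewrite phiL.
  by rewrite -(phiL (-1)) // phimon // ltW.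
have HLeq : forall p z w, z <= -1 -> H p z w = HL p z w.
  by move=> p z w hz; rewrite H7 phiL // mul1r subrr mul0r addr0.
have HReq : forall p z w, 1 <= z -> H p z w = HR p z w.
  by move=> p z w hz; rewrite H7 phiR // mul0r subr0 mul1r add0r.
have HLH : forall p y c w, y <= -1 -> HL p (y + c) w = H p y (tau c w).
  by move=> p y c w hy; rewrite H8L HLeq.
have HRH : forall p y c w, 1 <= y -> HR p (y + c) w = H p y (tau c w).
  by move=> p y c w hy; rewrite H8R HReq.
have HL6 : forall p y w, HL 0 y w <= HL p y w.
  move=> p y w; have -> : y = -1 + (y + 1) by rewrite addrCA addNr addr0.
  by rewrite !HLH ?lexx.
have HR6 : forall p y w, HR 0 y w <= HR p y w.
  move=> p y w; have -> : y = 1 + (y - 1) by rewrite addrCA subrr addr0.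
  by rewrite !HRH ?lexx.
have H40 : forall y y0 w, `|H 0 y0 w - H 0 y w| <= w0 `|y - y0|.
  by move=> y y0 w; have := H4 0 y y0 w; rewrite normr0 addr0 mulr1.
have wsm := @mod_small R w0 w0cvg w00.
have lscH : forall w y0 e, 0 < e -> exists2 d, 0 < d &
    forall y, `|y - y0| < d -> H 0 y0 w <= H 0 y w + e.
  move=> w y0 e e0; have [dd d0 Hd] := wsm e e0; exists dd => // y hy.
  have := le_lt_trans (H40 y y0 w) (Hd _ (normr_ge0 _) hy).
  rewrite ltr_norml => /andP [_ h]; move: h; clear; lra.
have HLs : forall p y c w, y - c <= -1 -> HL p y w = H p (y - c) (tau c w).
  by move=> p y c w h; rewrite -HLH // subrK.
have HRs : forall p y c w, 1 <= y - c -> HR p y w = H p (y - c) (tau c w).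
  by move=> p y c w h; rewrite -HRH // subrK.
have lscHL : forall w y0 e, 0 < e -> exists2 d, 0 < d &
    forall y, `|y - y0| < d -> HL 0 y0 w <= HL 0 y w + e.
  move=> w y0 e e0; have [dd d0 Hd] := wsm e e0; exists (Order.min dd 1).
    by rewrite lt_min d0 ltr01.
  move=> y; rewrite lt_min => /andP [hy1 hy2].
  have hy3 : y - (y0 + 2) <= -1.
    by move: hy2; rewrite ltr_norml => /andP [_ h]; move: h; clear; lra.
  have hy4 : y0 - (y0 + 2) <= -1 by clear; lra.
  rewrite (HLs _ _ _ _ hy3) (HLs _ _ _ _ hy4).
  have := le_lt_trans (H40 (y - (y0 + 2)) (y0 - (y0 + 2)) (tau (y0 + 2) w)) (Hd _ (normr_ge0 _) _).
  have -> : y - (y0 + 2) - (y0 - (y0 + 2)) = y - y0 by clear; lra.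
  move=> /(_ hy1); rewrite ltr_norml => /andP [_ h]; move: h; clear; lra.
have lscHR : forall w y0 e, 0 < e -> exists2 d, 0 < d &
    forall y, `|y - y0| < d -> HR 0 y0 w <= HR 0 y w + e.
  move=> w y0 e e0; have [dd d0 Hd] := wsm e e0; exists (Order.min dd 1).
    by rewrite lt_min d0 ltr01.
  move=> y; rewrite lt_min => /andP [hy1 hy2].
  have hy3 : 1 <= y - (y0 - 2).
    by move: hy2; rewrite ltr_norml => /andP [h _]; move: h; clear; lra.
  have hy4 : 1 <= y0 - (y0 - 2) by clear; lra.
  rewrite (HRs _ _ _ _ hy3) (HRs _ _ _ _ hy4).
  have := le_lt_trans (H40 (y - (y0 - 2)) (y0 - (y0 - 2)) (tau (y0 - 2) w)) (Hd _ (normr_ge0 _) _).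
  have -> : y - (y0 - 2) - (y0 - (y0 - 2)) = y - y0 by clear; lra.
  move=> /(_ hy1); rewrite ltr_norml => /andP [_ h]; move: h; clear; lra.
have effH : forall w y, ((H 0 y w)%:E <= effA (fun p y => H p y w))%E.
  by move=> w; apply: le_effA => //; exact: lscH.
have effHL : forall w y, ((HL 0 y w)%:E <= effA (fun p y => HL p y w))%E.
  by move=> w; apply: le_effA => //; exact: lscHL.
have effHR : forall w y, ((HR 0 y w)%:E <= effA (fun p y => HR p y w))%E.
  by move=> w; apply: le_effA => //; exact: lscHR.
pose rq (k : nat) : rat := odflt 0%R (pickle_inv k).
have rqK : forall r : rat, rq (pickle r) = r by move=> r; rewrite /rq pickleK_inv.
pose B (q : R) := [set w | forall z, z <= -1 -> H 0 z w <= q].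
pose BR (q : R) := [set w | forall z, 1 <= z -> H 0 z w <= q].
have mlev : forall y q, measurable [set w | H 0 y w <= q].
  move=> y q.
  have mf : measurable_fun setT (fun w => H 0 y w).
    exact: (measurable_fun_pair2 ((0:R), y) mH).
  have -> : [set w | H 0 y w <= q] = setT `&` (fun w => H 0 y w) @^-1` [set` `]-oo, q]].
    by apply/seteqP; split => w /=; rewrite in_itv /= => h //; case: h.
  by apply: mf.
have mB : forall q, measurable (B q).
  move=> q; have -> : B q = \bigcap_k [set w | H 0 (-1 - `|ratr (rq k)|) w <= q].
    apply/seteqP; split => w /=.
      move=> h k _; apply: h; have := normr_ge0 (ratr (rq k) : R); clear; lra.
    move=> h; apply: (@dense_le R _ _ (lscH w)) => r; have := h (pickle r) I; by rewrite rqK.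
  by apply: bigcapT_measurable => k; exact: mlev.
have mBR : forall q, measurable (BR q).
  move=> q; have -> : BR q = \bigcap_k [set w | H 0 (1 + `|ratr (rq k)|) w <= q].
    apply/seteqP; split => w /=.
      move=> h k _; apply: h; have := normr_ge0 (ratr (rq k) : R); clear; lra.
    move=> h z hz.
    have := @dense_le _ (fun z => H 0 (- z) w) q _ _ (- z).
    rewrite opprK; apply; last by move: hz; clear; lra.
      move=> z0 e e0; have [dd d0 Hd] := lscH w (- z0) e e0; exists dd => // y hy.
      by apply: Hd; rewrite -opprD normrN.
    by move=> r; rewrite opprB opprK addrC; have := h (pickle r) I; rewrite rqK.
  by apply: bigcapT_measurable => k; exact: mlev.
have mpre : forall c A, measurable A -> measurable (tau c @^-1` A).
  by move=> c A mA; rewrite -[X in measurable X]setTI; by apply: taum.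
have negl : forall A c, measurable A -> tau c @^-1` A `<=` A ->
    P.-negligible (A `\` tau c @^-1` A).
  move=> A c mA sub; apply/negligibleP; first by apply: measurableD => //; exact: mpre.
  rewrite measureD //; last 2 first.
  - exact: mpre.
  - by apply: (le_lt_trans (probability_le1 P mA)); exact: ltry.
  rewrite (setIidr sub).
  have h := taupres c A mA.
  have fA : P A \is a fin_num by rewrite fin_num_measure.
  have h2 : (P A - P (tau c @^-1` A))%E = 0%E by rewrite h subee.
  exact: h2.
have inclL : forall q (n : nat), tau (n.+1%:R) @^-1` B q `<=` B q.
  move=> q n w /= h z hz.
  have hc : z - n.+1%:R <= -1 by have := ler0n R n.+1; move: hz; clear; lra.
  by rewrite HLeq // (HLs 0 z (n.+1%:R) w hc); apply: h.
have inclR : forall q (n : nat), tau (- n.+1%:R) @^-1` BR q `<=` BR q.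
  move=> q n w /= h z hz.
  have hc : 1 <= z - - n.+1%:R by have := ler0n R n.+1; move: hz; clear; lra.
  by rewrite HReq // (HRs 0 z (- n.+1%:R) w hc); apply: h.
have AEL : {ae P, forall w, forall k n, B (ratr (rq k)) w -> B (ratr (rq k)) (tau n.+1%:R w)}.
  apply: ae_foralln => k; apply: ae_foralln => n.
  apply: (negligibleS _ (negl _ _ (mB (ratr (rq k))) (inclL (ratr (rq k)) n))) => w /= h.
  by move/not_implyP: h => [h1 h2]; split.
have AER : {ae P, forall w, forall k n, BR (ratr (rq k)) w -> BR (ratr (rq k)) (tau (- n.+1%:R) w)}.
  apply: ae_foralln => k; apply: ae_foralln => n.
  apply: (negligibleS _ (negl _ _ (mBR (ratr (rq k))) (inclR (ratr (rq k)) n))) => w /= h.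
  by move/not_implyP: h => [h1 h2]; split.
have [NL [mNL PNL sNL]] := aeL.
have [NR [mNR PNR sNR]] := aeR.
have [N1 [mN1 PN1 sN1]] := AEL.
have [N2 [mN2 PN2 sN2]] := AER.
exists (~` (NL `|` NR `|` N1 `|` N2)); split.
  by apply: measurableC; do 3 apply: measurableU => //.
split.
  rewrite probability_setC; last by do 3 apply: measurableU => //.
  have : P.-negligible (NL `|` NR `|` N1 `|` N2).
    have nN : forall N, measurable N -> P N = 0%E -> P.-negligible N by move=> N mN PN; exists N; split.
    by apply: negligibleU; [apply: negligibleU; [apply: negligibleU|]|]; exact: nN.
  move=> /measure_negligible -> ; last by do 3 apply: measurableU => //.
  by rewrite sube0.
move=> w /= Hw.
have eL : effA (fun p y => HL p y w) = muL.
  by apply: contrapT => h; apply: Hw; do 3 left; exact: sNL.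
have eR : effA (fun p y => HR p y w) = muR.
  by apply: contrapT => h; apply: Hw; do 2 left; right; exact: sNR.
have gL : forall k n, B (ratr (rq k)) w -> B (ratr (rq k)) (tau n.+1%:R w).
  by apply: contrapT => h; apply: Hw; left; right; exact: sN1.
have gR : forall k n, BR (ratr (rq k)) w -> BR (ratr (rq k)) (tau (- n.+1%:R) w).
  by apply: contrapT => h; apply: Hw; right; exact: sN2.
apply/eqP; rewrite eq_le; apply/andP; split.
  apply: effA_le => y.
  have hc : H 0 y w <= HL 0 y w \/ H 0 y w <= HR 0 y w.
    rewrite H7; have /andP [p0 p1] := phi01 y.
    have [hab|hab] := leP (HL 0 y w) (HR 0 y w); [right|left].
      have t : 0 <= phi y * (HR 0 y w - HL 0 y w) by apply: mulr_ge0 => //; rewrite subr_ge0.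
      by rewrite mulrBr in t; move: t; clear; lra.
    have t : 0 <= (1 - phi y) * (HL 0 y w - HR 0 y w).
      by apply: mulr_ge0; rewrite subr_ge0 // ltW.
    rewrite mulrBr in t; move: t; clear; lra.
  case: hc => hc.
    rewrite le_max; apply/orP; left; rewrite -eL.
    by apply: le_trans (effHL w y); rewrite lee_fin.
  rewrite le_max; apply/orP; right; rewrite -eR.
  by apply: le_trans (effHR w y); rewrite lee_fin.
rewrite ge_max; apply/andP; split.
  rewrite -eL; apply: effA_le => y.
  move: (effH w); case: (effA _) => [r| |] hE; last 2 first.
  - by rewrite leey.
  - by have := hE 0; rewrite leNgt ltNye.
  rewrite lee_fin; apply/negPn/negP; rewrite -ltNge => hlt.
  have [q] := rat_in_itvoo hlt; rewrite in_itv /= => /andP [q1 q2].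
  have hB : B (ratr (rq (pickle q))) w.
    rewrite rqK => z hz; have := hE z; rewrite lee_fin => h; exact: (le_trans h (ltW q1)).
  have := gL _ (Num.truncn y).+1 hB; rewrite rqK => /(_ (y - ((Num.truncn y).+2)%:R)) h.
  have hy : y - ((Num.truncn y).+2)%:R <= -1.
    have -> : ((Num.truncn y).+2%:R : R) = (Num.truncn y).+1%:R + 1 by rewrite natr1.
    have := archimedean.Num.Theory.truncnS_gt y; clear; lra.
  move: (h hy); rewrite -HLs // => h'.
  by have := lt_le_trans q2 h'; rewrite ltxx.
rewrite -eR; apply: effA_le => y.
move: (effH w); case: (effA _) => [r| |] hE; last 2 first.
- by rewrite leey.
- by have := hE 0; rewrite leNgt ltNye.
rewrite lee_fin; apply/negPn/negP; rewrite -ltNge => hlt.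
have [q] := rat_in_itvoo hlt; rewrite in_itv /= => /andP [q1 q2].
have hB : BR (ratr (rq (pickle q))) w.
  rewrite rqK => z hz; have := hE z; rewrite lee_fin => h; exact: (le_trans h (ltW q1)).
have := gR _ (Num.truncn (- y)).+1 hB; rewrite rqK => /(_ (y - - ((Num.truncn (- y)).+2)%:R)) h.
have hy : 1 <= y - - ((Num.truncn (- y)).+2)%:R.
  have -> : ((Num.truncn (- y)).+2%:R : R) = (Num.truncn (- y)).+1%:R + 1 by rewrite natr1.
  have := archimedean.Num.Theory.truncnS_gt (- y); clear; lra.
move: (h hy); rewrite -HRs // => h'.
by have := lt_le_trans q2 h'; rewrite ltxx.
Qed.
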